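(* With the setting in the context, call two operators $Q_m,Q_{m'}$ with $m,m'\in\ker(\delta_0)$ equivalent if they have the same eigenvalue on every ground state $\mathcal A_0|f\rangle$, $f\in\ker(\delta^0)$ (equivalently, $m$ and $m'$ agree on $\ker(\delta^0)$). Then the assignment sending $Q_m$ to the character $\bar m:H^0(C,G)\to U(1)$, $\bar m([f])=m(f)$, is well defined and induces a bijection between the set of equivalence classes of such operators and the character group $\widehat{H^0(C,G)}=\mathrm{Hom}(H^0(C,G),U(1))$.
   Context: $(C_\bullet,\partial^C_\bullet)$ is a chain complex with each $C_n$ free abelian on a finite set $K_n$, $K_n\ne\emptyset$ for finitely many $n$; $(G_\bullet,\partial^G_\bullet)$ is a chain complex of finite abelian groups. $\mathrm{hom}(C,G)^p=\prod_n\mathrm{Hom}(C_n,G_{n-p})$ with $(\delta^pf)_n=f_{n-1}\partial^C_n-(-1)^p\partial^G_{n-p}f_n$, and $H^0(C,G)=\ker\delta^0/\mathrm{im}\,\delta^{-1}$. $\mathrm{hom}(C,G)_p=\mathrm{Hom}(\mathrm{hom}(C,G)^p,U(1))$ (written additively), $\delta_0:\mathrm{hom}(C,G)_0\to\mathrm{hom}(C,G)_{-1}$, $\delta_0m=m\circ\delta^{-1}$. $\mathcal H=\bigotimes_n\bigotimes_{x\in K_n}\mathbb C[G_n]$ with orthonormal basis $|f\rangle$, $f\in\mathrm{hom}(C,G)^0$. $Q_m|f\rangle=m(f)|f\rangle$, $P_t|f\rangle=|f+t\rangle$, and $\mathcal A_0=\frac1{|\mathrm{hom}(C,G)^{-1}|}\sum_{t\in\mathrm{hom}(C,G)^{-1}}P_{\delta^{-1}t}$.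 *)

(* Defs.v *)
From HB Require Import structures.
From mathcomp Require Import all_boot all_order all_algebra all_fingroup all_field.
Set Implicit Arguments. Unset Strict Implicit. Unset Printing Implicit Defensive.
Import Order.TTheory GRing.Theory Num.Theory.
Local Open Scope ring_scope.

Section DProd.
Variables (I : finType) (F : I -> finZmodType).

Definition dprodZ := {dffun forall i : I, F i}.
HB.instance Definition _ := Finite.on dprodZ.

Definition dprod_zero : dprodZ := @finfun I F (fun i => 0).
Definition dprod_opp (f : dprodZ) : dprodZ := @finfun I F (fun i => - f i).
Definition dprod_add (f g : dprodZ) : dprodZ := @finfun I F (fun i => f i + g i).

Lemma dprod_addA : associative dprod_add.
Proof. by move=> f g h; apply/ffunP=> i; rewrite !ffunE addrA. Qed.
Lemma dprod_addC : commutative dprod_add.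
Proof. by move=> f g; apply/ffunP=> i; rewrite !ffunE addrC. Qed.
Lemma dprod_add0 : left_id dprod_zero dprod_add.
Proof. by move=> f; apply/ffunP=> i; rewrite !ffunE add0r. Qed.
Lemma dprod_addN : left_inverse dprod_zero dprod_opp dprod_add.
Proof. by move=> f; apply/ffunP=> i; rewrite !ffunE addNr. Qed.

HB.instance Definition _ := GRing.isZmodule.Build dprodZ
  dprod_addA dprod_addC dprod_add0 dprod_addN.
End DProd.

(* The chain complex C: C_n is free abelian on K_n = {x : cell | deg x = n}; *)
(* the boundary is encoded by its integer matrix bd x y (coefficient of the  *)
(* basis element y in the boundary of x).                                    *)
Record cell_complex := CellComplex {
  cell : finType;
  deg : cell -> int;
  bd : cell -> cell -> int;
  bd_deg : forall x y, bd x y != 0 -> deg y = deg x - 1;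
  bd_bd : forall x z, \sum_(y : cell) bd x y * bd y z = 0
}.

Record fin_chain_complex := FinChainComplex {
  grp : int -> finZmodType;
  bdG : forall n : int, {additive grp n -> grp (n - 1)};
  bdG_bdG : forall (n : int) (g : grp n), bdG (n - 1) (bdG n g) = 0
}.

Section Setting.
Variables (C : cell_complex) (G : fin_chain_complex).

(* hom(C,G)^p = prod_n Hom(C_n, G_{n-p}) = prod_{x cell} G_{deg x - p} *)
Definition cochain (p : int) : finZmodType :=
  dprodZ (fun x : cell C => grp G (deg x - p)).

(* transport along an equality of degrees (0 if the degrees differ) *)
Definition gcast (m n : int) (g : grp G m) : grp G n :=
  match m =P n with
  | ReflectT e => ecast k (grp G k) e g
  | ReflectF _ => 0
  end.

(* (delta^p f)_n = f_{n-1} o bd^C_n - (-1)^p bd^G_{n-p} o f_n, evaluated on the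
   basis element x of C_n. *)
Definition delta (p : int) (f : cochain p) : cochain (p + 1) :=
  @finfun (cell C) (fun x => grp G (deg x - (p + 1))) (fun x =>
    \sum_(y : cell C) (gcast (deg x - (p + 1)) (f y)) *~ bd x y
    - (gcast (deg x - (p + 1)) (@bdG G (deg x - p) (f x))) *~ ((-1) ^ p)).

Definition ker_delta0 : {set cochain 0} := [set f | delta (p := 0) f == 0].
Definition im_delta_m1 : {set cochain 0} :=
  [set (delta t : cochain 0) | t : cochain (-1)].

Definition H0 : {set coset_of im_delta_m1} := (ker_delta0 / im_delta_m1)%g.

Definition U1char (m : cochain 0 -> algC) :=
  (forall a b, m (a + b) = m a * m b) /\ (forall a, `|m a| = 1).

Definition delta_0 (m : cochain 0 -> algC) : cochain (-1) -> algC :=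
  fun t => m (delta t).
Definition in_ker_delta_0 (m : cochain 0 -> algC) :=
  forall t, delta_0 m t = 1.

(* Characters of H^0(C,G) (a subgroup of coset_of im_delta_m1), U(1)-valued;
   two characters are equal iff they agree on H0. *)
Definition H0char (chi : coset_of im_delta_m1 -> algC) :=
  {in H0 &, forall a b, chi (a * b)%g = chi a * chi b} /\
  {in H0, forall a, `|chi a| = 1}.

Definition mbar (m : cochain 0 -> algC) (c : coset_of im_delta_m1) : algC :=
  m (repr c).

(* Hilbert space H = (x)_n (x)_{x in K_n} C[G_n], with basis |f>, f in hom^0: *)
(* a vector is its family of coordinates in that basis.                    *)
Definition hspace := {ffun cochain 0 -> algC}.
Definition ket (f : cochain 0) : hspace := [ffun g => (g == f)%:R].
Definition Qop (m : cochain 0 -> algC) (v : hspace) : hspace :=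
  [ffun g => m g * v g].
(* P_t |f> = |f + t> *)
Definition Pop (t : cochain 0) (v : hspace) : hspace := [ffun g => v (g - t)].
Definition A0 (v : hspace) : hspace :=
  [ffun g => (#|cochain (-1)|%:R)^-1 *
               \sum_(t : cochain (-1)) Pop (delta t) v g].

Definition equivQ (m m' : cochain 0 -> algC) :=
  forall f, f \in ker_delta0 -> exists lam : algC,
    Qop m (A0 (ket f)) = [ffun g => lam * A0 (ket f) g] /\
    Qop m' (A0 (ket f)) = [ffun g => lam * A0 (ket f) g].

End Setting.

(* Main.v *)
Require Import Defs.
From HB Require Import structures.
From mathcomp Require Import all_boot all_order all_algebra all_fingroup all_field all_character.
Set Implicit Arguments. Unset Strict Implicit. Unset Printing Implicit Defensive.
Import Order.TTheory GRing.Theory Num.Theory FinRing.Theory.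
Local Open Scope ring_scope. Local Open Scope group_scope. Local Open Scope ring_scope.

Section Aux.
Variables (C : cell_complex) (G : fin_chain_complex).

Lemma dprodDE (I : finType) (F : I -> finZmodType) (f g : dprodZ F) i :
  (f + g) i = f i + g i.
Proof. exact: ffunE. Qed.

Lemma gcastD m n (a b : grp G m) : @gcast G m n (a + b) = @gcast G m n a + @gcast G m n b.
Proof.
rewrite /gcast; case: eqP => [e|_]; last by rewrite addr0.
by case: n / e.
Qed.

Lemma gcast_bdD n k (a b : grp G n) :
  gcast k (bdG G n (a + b)) = gcast k (bdG G n a) + gcast k (bdG G n b).
Proof. rewrite raddfD; apply: gcastD. Qed.

Lemma deltaD p (f g : cochain C G p) : delta (f + g) = delta f + delta g.
Proof.
apply/ffunP => x; rewrite !ffunE.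
rewrite gcast_bdD mulrzDl.
under eq_bigr => y _ do rewrite ffunE gcastD mulrzDl.
rewrite big_split /= -addrACA -opprD. reflexivity.
Qed.

Lemma delta0 p : delta (0 : cochain C G p) = 0.
Proof.
have h := deltaD (0 : cochain C G p) 0; rewrite addr0 in h.
by apply: (addrI (delta (0 : cochain C G p))); rewrite addr0 -h.
Qed.

Lemma im_gs : group_set (im_delta_m1 C G).
Proof.
apply/group_setP; split.
  by apply/imsetP; exists 0 => //; rewrite delta0.
move=> _ _ /imsetP[t _ ->] /imsetP[s _ ->].
by apply/imsetP; exists (t + s) => //; rewrite deltaD.
Qed.

Lemma ker_gs : group_set (ker_delta0 C G).
Proof.
apply/group_setP; split.
  by rewrite inE delta0.
move=> f g; rewrite !inE => /eqP hf /eqP hg.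
by rewrite (zmodMgE f g) deltaD hf hg addr0.
Qed.

Canonical imG := Group im_gs.
Canonical kerG := Group ker_gs.

Notation im := (im_delta_m1 C G).

Lemma normT (x : cochain C G 0) : x \in 'N(im).
Proof.
by apply: (subsetP (sub_abelian_norm (zmod_abelian setT) (subsetT _))); rewrite inE.
Qed.

Lemma U1_0 (m : cochain C G 0 -> algC) : U1char m -> m 0 = 1.
Proof.
case=> mM mN; have h : m 0 * 1 = m 0 * m 0 by rewrite -mM addr0 mulr1.
have nz : m 0 != 0 by rewrite -normr_eq0 mN oner_eq0.
by symmetry; apply: (mulfI nz).
Qed.

Lemma coset_eqm (m : cochain C G 0 -> algC) f g : U1char m -> in_ker_delta_0 m ->
  coset im f = coset im g -> m f = m g.
Proof.
move=> [mM mN] mk e.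
have : coset im (f * g^-1)%g = 1%g.
  rewrite morphM ?morphV ?normT ?groupV //.
  by change (coset im f * (coset im g)^-1 = 1)%g; rewrite e mulgV.
move/(coset_idr (normT _)) => /imsetP[t _ et].
have -> : f = (delta t : cochain C G 0) + g.
  by rewrite -et zmodMgE zmodVgE addrNK.
by rewrite mM; have := mk t; rewrite /delta_0 => ->; rewrite mul1r.
Qed.

Lemma mbar_coset (m : cochain C G 0 -> algC) f : U1char m -> in_ker_delta_0 m ->
  mbar m (coset im f) = m f.
Proof.
move=> mU mk; rewrite /mbar; apply: coset_eqm => //.
by rewrite coset_reprK.
Qed.

Lemma mbar_H0char (m : cochain C G 0 -> algC) : U1char m -> in_ker_delta_0 m ->
  H0char (mbar m).
Proof.
move=> mU mk; split; last by move=> a _; rewrite /mbar; case: mU.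
move=> a b _ _; rewrite /mbar.
rewrite -[in LHS](coset_reprK a) -[in LHS](coset_reprK b).
have -> : (coset im (repr a) * coset im (repr b))%g = coset im (repr a + repr b).
  by rewrite -zmodMgE morphM ?normT.
rewrite (coset_eqm mU mk (coset_reprK (coset im (repr a + repr b)))).
by case: mU => ->.
Qed.

Lemma A0ketE (f g : cochain C G 0) : A0 (ket f) g =
  (#|cochain C G (-1)|%:R)^-1 * \sum_(t : cochain C G (-1)) ((g - (delta t : cochain C G 0) == f)%:R).
Proof.
rewrite ffunE; congr (_ * _); apply: eq_bigr => t _.
by rewrite !ffunE.
Qed.

Lemma cardm1_neq0 : (#|cochain C G (-1)|%:R)^-1 != 0 :> algC.
Proof.
rewrite invr_eq0 pnatr_eq0 -lt0n; apply/card_gt0P; by exists 0.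
Qed.

Lemma A0ket_neq0 (f g : cochain C G 0) : A0 (ket f) g != 0 ->
  exists t : cochain C G (-1), g - (delta t : cochain C G 0) = f.
Proof.
rewrite A0ketE mulf_eq0 negb_or => /andP[_ nz].
have [t /eqP e|h] := pickP (fun t : cochain C G (-1) => g - (delta t : cochain C G 0) == f).
  by exists t.
by move: nz; rewrite big1 ?eqxx // => t _; rewrite h.
Qed.

Lemma A0ket_self (f : cochain C G 0) : A0 (ket f) f != 0.
Proof.
rewrite A0ketE mulf_neq0 ?cardm1_neq0 //.
rewrite -natr_sum pnatr_eq0 (bigD1 0) //= delta0 subr0 eqxx.
by [].
Qed.

Lemma Qop_eig (m : cochain C G 0 -> algC) f : U1char m -> in_ker_delta_0 m ->
  Qop m (A0 (ket f)) = [ffun g => m f * A0 (ket f) g].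
Proof.
move=> [mM mN] mk; apply/ffunP => g; rewrite ffunE [in RHS]ffunE.
have [->|nz] := eqVneq (A0 (ket f) g) 0; first by rewrite !mulr0.
have [t et] := A0ket_neq0 nz.
have -> : g = f + (delta t : cochain C G 0) by rewrite -et subrK.
by rewrite mM; have := mk t; rewrite /delta_0 => ->; rewrite mulr1.
Qed.

Lemma equivQ_ker (m m' : cochain C G 0 -> algC) :
  U1char m -> in_ker_delta_0 m -> U1char m' -> in_ker_delta_0 m' ->
  (equivQ m m' <-> {in ker_delta0 C G, m =1 m'}).
Proof.
move=> mU mk mU' mk'; split.
  move=> h f fk; have [lam [e1 e2]] := h f fk.
  have nz := A0ket_self f.
  move: (A0 (ket f)) nz e1 e2 => v nz e1 e2.
  have := congr1 (fun w : hspace C G => w f) e1.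
  have := congr1 (fun w : hspace C G => w f) e2.
  rewrite !ffunE => h2 h1.
  by rewrite (mulIf nz h1) (mulIf nz h2).
move=> h f fk; exists (m f); split; first exact: Qop_eig.
by rewrite h // Qop_eig.
Qed.

Lemma mem_H0 (a : coset_of im) : a \in H0 C G -> exists2 f, f \in ker_delta0 C G & a = coset im f.
Proof.
rewrite /H0 -imset_coset => /imsetP[f fk ->]; by exists f.
Qed.

Lemma coset_H0 (f : cochain C G 0) : f \in ker_delta0 C G -> coset im f \in H0 C G.
Proof. by move=> fk; rewrite /H0 mem_quotient. Qed.

Lemma surj (chi : coset_of im -> algC) : H0char chi ->
  exists m : cochain C G 0 -> algC,
    [/\ U1char m, in_ker_delta_0 m & {in H0 C G, mbar m =1 chi}].
Proof.
move=> [chiM chiN].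
pose HH := (kerG / imG)%G.
have HHE : gval HH = H0 C G by [].
have H1 : (1 : coset_of im)%g \in H0 C G by rewrite -HHE group1.
have chi1 : chi 1%g = 1.
  have h : chi 1%g * 1 = chi 1%g * chi 1%g by rewrite -chiM ?mulg1 ?mulr1.
  have nz : chi 1%g != 0 by rewrite -normr_eq0 chiN ?oner_eq0.
  by symmetry; apply: (mulfI nz).
pose rZ (x : coset_of im) := ((chi x)%:M : 'M[algC]_(1,1)).
have rZP : mx_repr HH rZ.
  split=> [|x y Hx Hy]; first by rewrite /rZ chi1.
  by rewrite /rZ chiM -?HHE // scalar_mxM.
pose psi := cfRepr (MxRepresentation rZP).
have lin_psi : psi \is a linear_char by rewrite qualifE/= cfRepr_char cfRepr1 eqxx.
have psiE : {in HH, psi =1 chi}.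
  by move=> x Hx; rewrite cfunE Hx mulr1n /= /rZ mxtrace_scalar.
have [j ej] := irrP (lin_char_irr lin_psi).
pose GG := [set: coset_of im]%G.
have sHG : HH \subset GG by apply: subsetT.
have abG : abelian GG.
  by rewrite /GG /= -(quotientT imG); apply: quotient_abelian; apply: zmod_abelian.
have [i ci] := neq0_has_constt (Ind_irr_neq0 j sHG).
rewrite constt_Ind_Res in ci.
have lini : 'chi[GG]_i \is a linear_char by move/char_abelianP: abG; apply.
have [k ek] := irrP (lin_char_irr (cfRes_lin_char HH lini)).
move: ci; rewrite ek constt_irr inE => /eqP jk; subst k.
have chiE : {in HH, 'chi[GG]_i =1 chi}.
  by move=> x Hx; rewrite -(cfResE _ sHG Hx) ek -ej psiE.
exists (fun f => 'chi[GG]_i (coset im f)); split.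
- split=> [a b|a]; last by rewrite normC_lin_char // inE.
  rewrite -zmodMgE morphM ?normT //.
  by rewrite (lin_charM lini) ?inE.
- move=> t; rewrite /delta_0 coset_id ?lin_char1 //.
  by apply/imsetP; exists t.
- by move=> a Ha; rewrite /mbar coset_reprK chiE // HHE.
Qed.

End Aux.

Theorem proposition7 (C : cell_complex) (G : fin_chain_complex) :
  (* the assignment m |-> mbar, mbar([f]) = m(f), is well defined and lands
     in the character group of H^0(C,G) *)
  (forall m : cochain C G 0 -> algC, U1char m -> in_ker_delta_0 m ->
     (forall f g, f \in ker_delta0 C G -> g \in ker_delta0 C G ->
        coset (im_delta_m1 C G) f = coset (im_delta_m1 C G) g -> m f = m g)
     /\ (forall f, f \in ker_delta0 C G -> mbar m (coset (im_delta_m1 C G) f) = m f)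
     /\ H0char (mbar m))
  (* equivalence of Q_m, Q_m' (same eigenvalue on every ground state) is
     agreement on ker delta^0, and is exactly equality of the induced characters
     (injectivity on classes) *)
  /\ (forall m m' : cochain C G 0 -> algC,
        U1char m -> in_ker_delta_0 m -> U1char m' -> in_ker_delta_0 m' ->
        (equivQ m m' <-> {in ker_delta0 C G, m =1 m'})
        /\ (equivQ m m' <-> {in H0 C G, mbar m =1 mbar m'}))
  (* surjectivity onto the character group of H^0(C,G) *)
  /\ (forall chi : coset_of (im_delta_m1 C G) -> algC, H0char chi ->
        exists m : cochain C G 0 -> algC,
          [/\ U1char m, in_ker_delta_0 m & {in H0 C G, mbar m =1 chi}]).
Proof.
split; [|split].
- move=> m mU mk; split; [|split].
  + by move=> f g _ _ e; apply: coset_eqm.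
  + by move=> f _; apply: mbar_coset.
  + exact: mbar_H0char.
- move=> m m' mU mk mU' mk'; split; first exact: equivQ_ker.
  have E := equivQ_ker mU mk mU' mk'.
  split.
  + move=> /E h a /mem_H0[f fk ->]; rewrite !mbar_coset //; exact: h.
  + move=> h; apply/E => f fk; by have := h _ (coset_H0 fk); rewrite (mbar_coset f mU mk) (mbar_coset f mU' mk').
- move=> chi hchi; have := @surj C G chi hchi. 
  move=> X; exact: X.
Qed.
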